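(* Let $Z\subset Y\subset X$ be Banach spaces, with $Z,Y$ closed subspaces of $X$. Suppose $Y$ has finite codimension in $X$ and $(X,Y)$ has the CQLP. Then $(X/Z,Y/Z)$ has the CQLP.
   Context: For a closed subspace $J$ of a Banach space $X$ with quotient map $\pi:X\to X/J$, the pair $(X,J)$ has the compact quotient lifting property (CQLP) if for every Banach space $W$ and every compact linear operator $T:W\to X/J$ there is a compact linear operator $S:W\to X$ with $\pi\circ S=T$ and $\|S\|=\|T\|$. *)

(* Defs.v *)
From HB Require Import structures.
From mathcomp Require Import all_boot all_order all_algebra.
From mathcomp Require Import all_classical all_reals all_analysis.
Set Implicit Arguments. Unset Strict Implicit. Unset Printing Implicit Defensive.
Import Order.TTheory GRing.Theory Num.Theory.
Import numFieldNormedType.Exports.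
Local Open Scope classical_set_scope.
Local Open Scope ring_scope.

Definition lin_subspace (R : realType) (X : normedModType R) (J : set X) : Prop :=
  J 0 /\ forall (a : R) (x y : X), J x -> J y -> J (a *: x + y).

Definition opnorm (R : realType) (W V : normedModType R) (T : W -> V) : R :=
  sup [set `|T w| | w in [set w : W | `|w| <= 1]].

Definition compact_op (R : realType) (W V : normedModType R) (T : {linear W -> V}) : Prop :=
  compact (closure (T @` [set w : W | `|w| <= 1])).

(* pi : X -> Q realizes the quotient map X -> X/J (Q is X/J up to the
   canonical isometric isomorphism): pi is linear, onto, with kernel J,
   and Q carries the quotient norm |pi x| = inf_{j in J} |x - j|. *)
Definition is_quotient_map (R : realType) (X Q : normedModType R) (J : set X)
    (pi : {linear X -> Q}) : Prop :=
  [/\ (forall q : Q, exists x : X, pi x = q),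
      (forall x : X, pi x = 0 <-> J x) &
      (forall x : X, `|pi x| = inf [set `|x - j| | j in J])].

Definition CQLP (R : realType) (X : completeNormedModType R) (J : set X) : Prop :=
  forall (Q : completeNormedModType R) (pi : {linear X -> Q}),
    is_quotient_map J pi ->
    forall (W : completeNormedModType R) (T : {linear W -> Q}),
      compact_op T ->
      exists S : {linear W -> X},
        [/\ compact_op S, (forall w : W, pi (S w) = T w) & opnorm S = opnorm T].

Definition finite_codim (R : realType) (X : normedModType R) (J : set X) : Prop :=
  exists (n : nat) (e : 'I_n -> X), forall x : X,
    exists c : 'I_n -> R, J (x - \sum_(i < n) c i *: e i).

(* Main.v *)
Require Import Defs.
From HB Require Import structures.
From mathcomp Require Import all_boot all_order all_algebra.
From mathcomp Require Import all_classical all_reals all_analysis.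
Import Order.TTheory GRing.Theory Num.Theory.
Import numFieldNormedType.Exports.
Local Open Scope classical_set_scope.
Local Open Scope ring_scope.

Lemma inf_le_elt (R : realType) (E : set R) (x : R) :
  (forall y, E y -> 0 <= y) -> E x -> inf E <= x.
Proof. move=> h Ex; apply: ge_inf => //; by exists 0. Qed.

Lemma quot_le (R : realType) (X Q : normedModType R) (J : set X)
    (pi : {linear X -> Q}) : is_quotient_map J pi -> J 0 ->
  forall x, `|pi x| <= `|x|.
Proof.
move=> [_ _ hn] J0 x; rewrite hn; apply: inf_le_elt.
  by move=> y [j _ <-].
by exists 0 => //; rewrite subr0.
Qed.

Lemma quot_comp (R : realType) (X QZ Q : normedModType R) (Y Z : set X)
  (piZ : {linear X -> QZ}) (pi : {linear QZ -> Q}) :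
  lin_subspace Y -> lin_subspace Z -> Z `<=` Y ->
  is_quotient_map Z piZ -> is_quotient_map (piZ @` Y) pi ->
  is_quotient_map Y (pi \o piZ).
Proof.
move=> [Y0 YS] [Z0 ZS] ZY [sZ kZ nZ] [s k n]; split.
- move=> q; have [q' <-] := s q; have [x <-] := sZ q'; by exists x.
- move=> x /=; rewrite k; split.
  + move=> [y Yy /eqP]; rewrite -subr_eq0 -linearB => /eqP /kZ /ZY Hyx.
    have := YS (-1) _ _ Hyx Yy; rewrite scaleN1r opprB subrK. done.
  + by move=> Yx; exists x.
- move=> x /=; rewrite n; apply/eqP; rewrite eq_le; apply/andP; split.
  + apply: lb_le_inf; first by exists `|x - 0|, 0.
    move=> _ [j Yj <-].
    apply: (le_trans _ (@quot_le _ _ _ Z piZ (And3 sZ kZ nZ) Z0 (x - j))).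
    apply: inf_le_elt; first by move=> _ [_ [y _ <-] <-].
    exists (piZ j); first by exists j.
    by rewrite -linearB.
  + apply: lb_le_inf; first by exists `|piZ x - piZ 0|; exists (piZ 0) => //; exists 0.
    move=> _ [_ [y Yy <-] <-]; rewrite -linearB nZ.
    apply: lb_le_inf; first by exists `|x - y - 0|, 0.
    move=> _ [z Zz <-]; apply: inf_le_elt; first by move=> _ [j _ <-].
    exists (y + z); last by rewrite opprD addrA.
    by have := YS 1 _ _ Yy (ZY _ Zz); rewrite scale1r.
Qed.
Lemma cont_of_le1 (R : realType) (V U : normedModType R) (f : {linear V -> U}) :
  (forall x, `|f x| <= `|x|) -> continuous f.
Proof.
move=> hf; apply: bounded_linear_continuous; rewrite /bounded_near.
near=> M.
apply: filterS (nbhsx_ballx (0 : V) 1 ltr01) => y.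
rewrite -ball_normE /ball_ /= sub0r normrN => hy.
apply: le_trans (hf y) _; apply: le_trans (ltW hy) _.
near: M; exact: nbhs_pinfty_ge.
Unshelve. all: by end_near.
Qed.
Lemma compact_comp (R : realType) (W V U : normedModType R)
  (S : {linear W -> V}) (f : {linear V -> U}) :
  continuous f -> compact_op S -> compact_op (f \o S).
Proof.
rewrite /compact_op => cf cS.
set K := closure _ in cS.
have cK : compact (f @` K).
  by apply: continuous_compact => //; apply: continuous_subspaceT.
apply: (subclosed_compact _ cK); first exact: closed_closure.
have -> : f @` K = closure (f @` K).
  by apply/closure_id; exact: compact_closed (@norm_hausdorff _ _) cK.
apply: closure_subset => _ [w hw <-]; exists (S w) => //.
by apply: subset_closure; exists w.
Qed.

Lemma opnorm_sandwich (R : realType) (W V U Q : normedModType R)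
  (S : W -> V) (P : W -> U) (T : W -> Q) :
  compact (closure (S @` [set w : W | `|w| <= 1])) ->
  (forall w, `|T w| <= `|P w|) -> (forall w, `|P w| <= `|S w|) ->
  opnorm S = opnorm T -> opnorm P = opnorm T.
Proof.
move=> cS hTP hPS e.
have [M [_ hM]] := compact_bounded cS.
have bS : forall w, `|w| <= 1 -> `|S w| <= M + 1.
  move=> w hw; apply: (hM (M + 1)); first by rewrite ltrDl.
  by apply: subset_closure; exists w.
have ne : forall (Z : normedModType R) (g : W -> Z),
  [set `|g w| | w in [set w : W | `|w| <= 1]] !=set0.
  by move=> Z g; exists `|g 0|, 0 => //=; rewrite normr0.
have hubS : has_sup [set `|S w| | w in [set w : W | `|w| <= 1]].
  split; first exact: (ne V S); exists (M + 1) => _ [w hw <-]; exact: bS.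
have hubP : has_sup [set `|P w| | w in [set w : W | `|w| <= 1]].
  split; first exact: (ne U P); exists (M + 1) => _ [w hw <-].
  exact: le_trans (hPS w) (bS w hw).
apply/eqP; rewrite eq_le; apply/andP; split.
- rewrite -e; apply: sup_le => //.
  move=> _ [w hw <-]; exists `|S w|; split; [by exists w | exact: hPS].
- apply: sup_le => //.
  move=> _ [w hw <-]; exists `|P w|; split; [by exists w | exact: hTP].
Qed.

Theorem proposition5 (R : realType) (X : completeNormedModType R) (Y Z : set X)
  (QZ : completeNormedModType R) (piZ : {linear X -> QZ}) :
  lin_subspace Y -> closed Y -> lin_subspace Z -> closed Z -> Z `<=` Y ->
  finite_codim Y ->
  is_quotient_map Z piZ ->
  CQLP Y ->
  CQLP (piZ @` Y).
Proof.
move=> HY _ HZ _ ZY _ HqZ cY Q pi Hpi W T cT.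
have Hc := @quot_comp _ _ _ _ Y Z piZ pi HY HZ ZY HqZ Hpi.
have [S [cS hS nS]] := cY Q (pi \o piZ) Hc W T cT.
have hle := @quot_le _ _ _ Z piZ HqZ HZ.1.
have hle2 : forall q, `|pi q| <= `|q|.
  apply: (@quot_le _ _ _ (piZ @` Y) pi Hpi); exists 0; first exact: HY.1.
  exact: linear0.
exists (piZ \o S); split.
- exact: (@compact_comp _ _ _ _ S piZ (@cont_of_le1 _ _ _ piZ hle) cS).
- exact: hS.
- apply: (@opnorm_sandwich _ _ _ _ _ S) => //.
  by move=> w; rewrite -hS; exact: hle2.
by move=> w; apply: (hle (S w)).
Qed.
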